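(* Let $n\ge 0$ be an integer. Let $K$ be the complete directed graph (without self-loops) on $2n+1$ vertices, and let $R$ be any graph obtained from $K$ by deleting, for each vertex, an arbitrary set of $n$ of its incoming edges. Then at least one vertex of $R$ has at least $n$ outgoing edges in $R$. *)

(* Defs.v *)
From mathcomp Require Import all_boot.
Set Implicit Arguments. Unset Strict Implicit. Unset Printing Implicit Defensive.

(* A deletion pattern assigns to every vertex v the set D v of sources u of
   the deleted incoming edges u -> v; it must consist of exactly n in-neighbours
   of v in K (so v \notin D v and #|D v| = n). *)
Definition valid_deletion (n : nat) (D : 'I_(2 * n + 1) -> {set 'I_(2 * n + 1)}) :=
  forall v, v \notin D v /\ #|D v| = n.

Definition R_edge (n : nat) (D : 'I_(2 * n + 1) -> {set 'I_(2 * n + 1)})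
  (u v : 'I_(2 * n + 1)) : bool := (u != v) && (u \notin D v).

Definition outdeg (n : nat) (D : 'I_(2 * n + 1) -> {set 'I_(2 * n + 1)})
  (u : 'I_(2 * n + 1)) : nat := #|[set v | R_edge D u v]|.

(* Main.v *)
Require Import Defs.
From mathcomp Require Import all_boot zify.
From Stdlib Require Import Lia.

Lemma card_sum_nat (T : finType) (P : pred T) : #|[set x | P x]| = \sum_x (P x : nat).
Proof.
by rewrite -sum1_card big_mkcond /=; apply: eq_bigr => x _; rewrite inE; case: (P x).
Qed.

Theorem corollary1 (n : nat) (D : 'I_(2 * n + 1) -> {set 'I_(2 * n + 1)}) :
  valid_deletion D -> exists u : 'I_(2 * n + 1), n <= outdeg D u.
Proof.
move=> HD.
have col : forall v, \sum_u (R_edge D u v : nat) = n.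
  move=> v; rewrite -card_sum_nat.
  have -> : [set u | R_edge D u v] = ~: (v |: D v).
    by apply/setP => u; rewrite !inE /R_edge negb_or.
  have [Hv Hc] := HD v.
  by rewrite cardsCs setCK cardsU1 Hv Hc card_ord; lia.
have tot : \sum_u outdeg D u = (2 * n + 1) * n.
  rewrite /outdeg.
  under eq_bigr do rewrite card_sum_nat.
  rewrite exchange_big /=.
  under eq_bigr do rewrite col.
  by rewrite sum_nat_const card_ord.
case: (pickP (fun u => n <= outdeg D u)) => [u Hu | H]; first by exists u.
have : \sum_u outdeg D u <= \sum_(u : 'I_(2 * n + 1)) n.-1.
  by apply: leq_sum => u _; move: (H u) => /= /negbT; rewrite -ltnNge; lia.
rewrite tot sum_nat_const card_ord.
move=> Hle; case: (posnP n) => [n0|npos].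
  have h : 0 < 2 * n + 1 by rewrite addn1.
  by exists (Ordinal h); rewrite {1}n0.
exfalso; move: Hle; case: n {D HD col tot H} npos => [|m] //= _.
rewrite leq_pmul2l ?addn1 //; lia.
Qed.
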